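(* Let $M$ be a compact manifold, $\phi\in\mathrm{Diff}^2(M)$ with finitely many periodic points, $M_P$ the set of all periodic points of $\phi$, and $\ell$ the lowest common multiple of their periods. Let $A\in\mathbb{M}_{N\times N}(\mathbb{R})$ with $\rho(A)<1$, $C\in\mathbb{R}^N$, $\omega\in C^2(M,\mathbb{R})$, and $f(m)=\sum_{k=0}^\infty A^kC\,\omega(\phi^{-k}(m))$. Then $f|_{M_P}$ is injective if and only if $g:M_P\to\mathbb{R}^N$, $g=\sum_{k=0}^{\ell-1}A^kC\,(\omega\circ\phi^{-k})$, is injective. *)

(* Defs.v *)
From HB Require Import structures.
From mathcomp Require Import all_boot all_algebra all_classical all_reals all_analysis.
Set Implicit Arguments. Unset Strict Implicit. Unset Printing Implicit Defensive.
Import GRing.Theory Num.Theory.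
Import numFieldTopology.Exports numFieldNormedType.Exports.
From mathcomp Require Import complex.
Local Open Scope classical_set_scope.
Local Open Scope ring_scope.

Definition is_periodic {T : Type} (phi : T -> T) (m : T) : Prop :=
  exists n : nat, (0 < n)%N /\ iter n phi m = m.

Definition periodic_points {T : Type} (phi : T -> T) : set T :=
  [set m | is_periodic phi m].

(** The (minimal) period of a periodic point (0 for non-periodic points). *)
Definition period {T : Type} (phi : T -> T) (m : T) : nat :=
  match pselect (exists n : nat, `[< (0 < n)%N /\ iter n phi m = m >]) with
  | left h => ex_minn h
  | right _ => 0%N
  end.

Definition lcm_periods {T : choiceType} (phi : T -> T) : nat :=
  \big[lcmn/1%N]_(m \in periodic_points phi) period phi m.

Definition eigenvalueC {R : rcfType} {N : nat} (A : 'M[R]_N) (z : R[i]) : bool :=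
  eigenvalue (map_mx (real_complex R) A) z.

Definition cmod {R : rcfType} (z : R[i]) : R :=
  Num.sqrt (complex.Re z ^+ 2 + complex.Im z ^+ 2).

Definition spectral_radius {R : realType} {N : nat} (A : 'M[R]_N) : R :=
  sup [set cmod z | z in [set z : R[i] | eigenvalueC A z]].

(** f(m) = sum_{k>=0} A^k C omega(phi^{-k}(m)), phi^{-1} = psi. *)
Definition f_series {R : realType} {T : Type} {N : nat} (A : 'M[R]_N)
  (C : 'cV[R]_N) (omega : T -> R) (psi : T -> T) (m : T) : 'cV[R]_N :=
  lim ((fun n : nat => \sum_(k < n) (omega (iter k psi m) *: (A ^+ k *m C))
         : 'cV[R]_N) @ \oo).

Definition g_sum {R : realType} {T : Type} {N : nat} (ell : nat) (A : 'M[R]_N)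
  (C : 'cV[R]_N) (omega : T -> R) (psi : T -> T) (m : T) : 'cV[R]_N :=
  \sum_(k < ell) (omega (iter k psi m) *: (A ^+ k *m C)).

(* Main.v *)
Require Import Defs.
From HB Require Import structures.
From mathcomp Require Import all_boot all_algebra all_classical all_reals all_analysis.
Import GRing.Theory Num.Theory.
Import numFieldTopology.Exports numFieldNormedType.Exports.
From mathcomp Require Import complex.
From mathcomp Require Import ring lra.
Local Open Scope classical_set_scope.
Local Open Scope ring_scope.
Import order.Order.TTheory.
Import Normc.

Lemma nc_ge0 (R : rcfType) (z : R[i]) : 0 <= normc z.
Proof. exact: (@normr_ge0 _ _ (z : Rcomplex R)). Qed.

Lemma nc_add (R : rcfType) (x y : R[i]) : normc (x + y) <= normc x + normc y.
Proof. exact: (@le_normcD R x y). Qed.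

Lemma entry_bound (R : rcfType) m n (X : 'M[R[i]]_(m, n)) :
  exists M, 0 <= M /\ forall i j, normc (X i j) <= M.
Proof.
exists (Num.max 0 (\big[Num.max/0]_(ij : 'I_m * 'I_n) normc (X ij.1 ij.2))).
split; first by rewrite le_max lexx.
move=> i j; rewrite le_max; apply/orP; right.
exact: (le_bigmax _ (fun ij : 'I_m * 'I_n => normc (X ij.1 ij.2)) (i, j)).
Qed.

Lemma geo_bound (R : rcfType) n (B : 'M[R[i]]_n.+1) (s : seq R[i]) :
  (forall z, z \in s -> normc z < 1) ->
  forall X : 'M[R[i]]_n.+1, (\prod_(z <- s) (B - z%:M)) *m X = 0 ->
  exists K r : R, (0 <= K /\ 0 <= r /\ r < 1 /\
     (forall (k : nat) (a b : 'I_n.+1), normc ((B ^+ k *m X) a b) <= K * r ^+ k)).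
Proof.
elim/last_ind: s => [|s l IH] Hs X.
  rewrite big_nil mul1mx => ->.
  exists 0, 0; do 3!split => //; move=> k i j; rewrite mulmx0 mxE normc0 mul0r //.
rewrite big_rcons /= -mulmxA => HX.
have Hl : normc l < 1 by apply: Hs; rewrite mem_rcons mem_head.
have [K [r [K0 [r0 [r1 HK]]]]] := IH (fun z hz => Hs z ltac:(by rewrite mem_rcons in_cons hz orbT)) _ HX.
set Y := (B - l%:M) *m X in HK.
have [M0 [M00 HM0]] := @entry_bound R _ _ X.
have nl0 := @nc_ge0 R l.
set r' := Num.max r ((normc l + 1) / 2).
have r'r : r <= r' by rewrite /r' le_max lexx.
have r'l : normc l < r'.
  rewrite /r' lt_max; apply/orP; right; lra.
have r'1 : r' < 1 by rewrite /r' gt_max r1 /=; lra.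
set K' := Num.max M0 (K / (r' - normc l)).
have K'M : M0 <= K' by rewrite /K' le_max lexx.
have K'K : K / (r' - normc l) <= K' by rewrite /K' le_max lexx orbT.
have KK : K <= K' * (r' - normc l).
  by rewrite -ler_pdivrMr ?subr_gt0.
exists K', r'; split; first by lra.
split; first by lra.
split => //.
have rec k : B ^+ k.+1 *m X = l *: (B ^+ k *m X) + B ^+ k *m Y.
  rewrite /Y mulmxBl mulmxBr mul_scalar_mx -scalemxAr !mulmxA -[B ^+ k *m B]/(B ^+ k * B) -exprSr.
  by rewrite addrC subrK.
elim=> [|k IHk] i j.
  by rewrite expr0 mul1mx expr0 mulr1 (le_trans (HM0 i j)).
rewrite rec mxE.
apply: le_trans (@nc_add R _ _) _.
rewrite [normc ((l *: (B ^+ k *m X)) i j)](_ : _ = normc (l * (B ^+ k *m X) i j)); last by rewrite mxE.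
rewrite normcM.
have h1 := IHk i j.
have h2 := HK k i j.
have t0 : 0 <= r' ^+ k by rewrite exprn_ge0 //; lra.
have h3 : r ^+ k <= r' ^+ k by rewrite lerXn2r // ?nnegrE //; lra.
have h4 : K * r ^+ k <= K * r' ^+ k by rewrite ler_wpM2l.
have h5 : normc l * normc ((B ^+ k *m X) i j) <= normc l * (K' * r' ^+ k) by rewrite ler_wpM2l.
have h6 : K * r' ^+ k <= K' * (r' - normc l) * r' ^+ k by rewrite ler_wpM2r.
rewrite exprS.
nra.
Qed.

Lemma cmod_normc (R : rcfType) (z : R[i]) : cmod z = normc z.
Proof. by case: z. Qed.

Lemma normc_real (R : rcfType) (a : R) : normc (a%:C)%C = `|a|.
Proof. by rewrite /normc /= expr0n /= addr0 sqrtr_sqr. Qed.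

Lemma map_mxX (R : rcfType) n (A : 'M[R]_n.+1) k :
  map_mx (real_complex R) (A ^+ k) = (map_mx (real_complex R) A) ^+ k.
Proof.
elim: k => [|k IH]; first by rewrite !expr0 map_mx1.
by rewrite !exprS -!mulmxE map_mxM IH.
Qed.

Lemma real_geo (R : realType) n (A : 'M[R]_n.+1) :
  spectral_radius A < 1 ->
  exists K r : R, (0 <= K /\ 0 <= r /\ r < 1 /\
     (forall (k : nat) (a b : 'I_n.+1), `|(A ^+ k) a b| <= K * r ^+ k)).
Proof.
move=> Hsr.
set B := map_mx (real_complex R) A.
have [rs Hrs] := closed_field_poly_normal (char_poly B).
rewrite (monicP (char_poly_monic B)) scale1r in Hrs.
have CH := Cayley_Hamilton B.
rewrite Hrs rmorph_prod /= in CH.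
have Hub : has_ubound [set cmod z | z in [set z : R[i] | eigenvalueC A z]].
  exists (\big[Num.max/0]_(z <- rs) normc z) => _ [z Hz <-].
  rewrite cmod_normc; apply: le_bigmax_seq => //.
  by rewrite -root_prod_XsubC -Hrs -eigenvalue_root_char.
have Hs : forall z, z \in rs -> normc z < 1.
  move=> z Hz; rewrite -cmod_normc; apply: le_lt_trans Hsr.
  apply: ub_le_sup => //; exists z => //=.
  by rewrite /eigenvalueC eigenvalue_root_char Hrs root_prod_XsubC.
have HX : \prod_(z <- rs) (B - z%:M) *m 1%:M = 0.
  rewrite mulmx1 -CH; apply: eq_bigr => z _.
  by rewrite rmorphB /= horner_mx_X horner_mx_C.
have [K [r [K0 [r0 [r1 HK]]]]] := @geo_bound R _ B rs Hs _ HX.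
exists K, r; do 3!split => //.
move=> k a b; have := HK k a b.
by rewrite mulmx1 -map_mxX mxE normc_real.
Qed.

Lemma mx_cvg0 (R : realType) m n (u : nat -> 'M[R]_(m, n)) (c r : R) :
  0 <= c -> 0 <= r -> r < 1 -> (forall k a b, `|u k a b| <= c * r ^+ k) ->
  u @ \oo --> (0 : 'M[R]_(m, n)).
Proof.
move=> c0 r0 r1 Hu.
have Hr : (fun k : nat => c * r ^+ k) @ \oo --> 0.
  rewrite -(mulr0 c); apply: cvgM; first exact: cvg_cst.
  by apply: cvg_expr; rewrite ger0_norm.
apply/cvgrPdist_le => e e0.
near=> k.
have Hk : `|0 - c * r ^+ k| <= e.
  by near: k; exact: ((cvgrPdist_le _ _).1 Hr e e0).
rewrite sub0r normrN /Num.Def.normr /= mx_normrE (bigmax_le _ (ltW e0)) //= => -[a b] _.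
apply: le_trans (Hu k a b) _.
move: Hk; rewrite sub0r normrN => Hk; apply: le_trans (ler_norm _) Hk.
Unshelve. all: by end_near. Qed.

Lemma period_spec (T : Type) (phi : T -> T) (m : T) :
  is_periodic phi m -> (0 < period phi m)%N /\ iter (period phi m) phi m = m.
Proof.
move=> [n [n0 hn]]; rewrite /period.
case: pselect => [h|hn']; last first.
  by exfalso; apply: hn'; exists n; apply/asboolP.
by case: ex_minnP => p /asboolP [].
Qed.

Lemma iter_mul (T : Type) (f : T -> T) (x : T) p q :
  iter p f x = x -> iter (q * p) f x = x.
Proof.
move=> hp; elim: q => [|q IH] //=.
by rewrite mulSn iterD IH hp.
Qed.

Lemma iter_can (T : Type) (phi psi : T -> T) (m : T) n :
  cancel phi psi -> iter n psi (iter n phi m) = m.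
Proof.
move=> can; elim: n m => [|n IH] m; first by [].
by rewrite [iter n.+1 phi m]iterS iterSr can IH.
Qed.

Lemma lcm_spec (T : choiceType) (phi : T -> T) :
  finite_set (periodic_points phi) ->
  (0 < lcm_periods phi)%N /\
  forall m, periodic_points phi m -> iter (lcm_periods phi) phi m = m.
Proof.
move=> fin; split.
  rewrite /lcm_periods fsbig_finite // big_seq.
  apply: (@big_ind nat (fun x => (0 < x)%N) 1%N lcmn) => //.
    by move=> x y hx hy; rewrite lcmn_gt0 hx hy.
  by move=> m; rewrite in_fset_set // inE => hm; case: (@period_spec _ _ _ hm).
move=> m hm.
have [p0 hp] := @period_spec _ _ _ hm.
have : (period phi m %| lcm_periods phi)%N.
  by rewrite /lcm_periods (fsbigD1 m) // dvdn_lcml.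
case/dvdnP => q ->.
exact: (@iter_mul _ _ _ _ _ hp).
Qed.

Lemma small_le0 (R : realType) (x c s : R) :
  0 <= s -> s < 1 -> (forall j : nat, x <= c * s ^+ j) -> x <= 0.
Proof.
move=> s0 s1 H.
have Hr : (fun k : nat => c * s ^+ k) @ \oo --> 0.
  rewrite -(mulr0 c); apply: cvgM; first exact: cvg_cst.
  by apply: cvg_expr; rewrite ger0_norm.
apply: (ler_cvg_to (cvg_cst x) Hr).
near=> j; exact: H.
Unshelve. all: by end_near. Qed.

Lemma rentry_bound (R : realType) m n (X : 'M[R]_(m, n)) :
  exists M, 0 <= M /\ forall i j, `|X i j| <= M.
Proof.
exists (Num.max 0 (\big[Num.max/0]_(ij : 'I_m * 'I_n) `|X ij.1 ij.2|)).
split; first by rewrite le_max lexx.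
move=> i j; rewrite le_max; apply/orP; right.
exact: (le_bigmax _ (fun ij : 'I_m * 'I_n => `|X ij.1 ij.2|) (i, j)).
Qed.

Lemma mulmx_bound (R : realType) m n p (P : 'M[R]_(m, n)) (X : 'M[R]_(n, p)) c W :
  (forall a b, `|P a b| <= c) -> (forall a b, `|X a b| <= W) ->
  forall a b, `|(P *m X) a b| <= n%:R * (c * W).
Proof.
move=> HP HX a b; rewrite mxE.
apply: le_trans (ler_norm_sum _ _ _) _.
apply: le_trans (_ : \sum_(j < n) (c * W) <= _).
  apply: ler_sum => j _; rewrite normrM.
  by apply: ler_pM => //; apply: le_trans (HP a j).
by rewrite sumr_const card_ord mulr_natl.
Qed.

Lemma unit_IQ (R : realType) n (A : 'M[R]_n.+1) (l : nat) (K r : R) :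
  (0 < l)%N -> 0 <= K -> 0 <= r -> r < 1 ->
  (forall (k : nat) (a b : 'I_n.+1), `|(A ^+ k) a b| <= K * r ^+ k) ->
  (1 - A ^+ l) \in unitmx.
Proof.
move=> l0 K0 r0 r1 HK.
rewrite unitmxE unitfE; apply/negP => /det0P [v vn0 hv].
move/negP: vn0; apply; apply/eqP.
have hQ : v *m A ^+ l = v.
  by move: hv; rewrite mulmxBr mulmx1 => /eqP; rewrite subr_eq0 => /eqP <-.
have hj j : v *m A ^+ (j * l) = v.
  elim: j => [|j IH]; first by rewrite mul0n expr0 mulmx1.
  by rewrite mulSn exprD -mulmxE mulmxA hQ IH.
have [W [W0 HW]] := @rentry_bound R _ _ v.
apply/matrixP => a b; rewrite (ord1 a) mxE; apply/eqP; rewrite -normr_le0.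
apply: (@small_le0 R _ (n.+1%:R * (K * W)) (r ^+ l)).
- by rewrite exprn_ge0.
- by rewrite exprn_ilt1 // -lt0n.
move=> j; rewrite -(hj j) -exprM mulnC.
have := @mulmx_bound R _ _ _ v (A ^+ (l * j)) W (K * r ^+ (l * j)) HW (HK _) 0 b.
have -> : n.+1%:R * (K * W) * r ^+ (l * j) = n.+1%:R * (W * (K * r ^+ (l * j))) by ring.
by [].
Qed.
Lemma hmx (R : realType) n : hausdorff_space 'cV[R]_n.+1.
Proof. exact: norm_hausdorff. Qed.
Lemma limmx (R : realType) n (u : nat -> 'cV[R]_n.+1) l : u @ \oo --> l -> lim (u @ \oo) = l.
Proof. move=> H; apply: cvg_lim => //; exact: hmx. Qed.
Lemma f_lim_aux (R: realType) (T:Type) n (A: 'M[R]_n.+1) (C : 'cV[R]_n.+1) (omega : T -> R) psi m (l : 'cV[R]_n.+1) : (fun k => \sum_(j<k) (omega (iter j psi m) *: (A^+j *m C))) @ \oo --> l -> f_series A C omega psi m = l.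
Proof. move=> H. rewrite /f_series. apply: limmx. exact: H. Qed.

Section Core.
Variables (R : realType) (T : Type) (n : nat) (A : 'M[R]_n.+1) (C : 'cV[R]_n.+1)
  (omega : T -> R) (psi : T -> T).

Definition Ssum k m : 'cV[R]_n.+1 :=
  \sum_(j < k) (omega (iter j psi m) *: (A ^+ j *m C)).

Lemma sum_shift k m : Ssum k.+1 m = omega m *: C + A *m Ssum k (psi m).
Proof.
rewrite /Ssum big_ord_recl /= expr0 mul1mx; congr (_ + _).
rewrite mulmx_sumr; apply: eq_bigr => j _.
rewrite add0n -iterS iterSr /bump /= add1n exprS -scalemxAr mulmxA -mulmxE.
by [].
Qed.

Lemma g_rec l m : iter l psi m = m ->
  g_sum l A C omega psi m = (1 - A ^+ l) *m (omega m *: C) + A *m g_sum l A C omega psi (psi m).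
Proof.
move=> hm.
have E : Ssum l.+1 m = g_sum l A C omega psi m + omega m *: (A ^+ l *m C).
  by rewrite /Ssum big_ord_recr /= hm.
have := sum_shift l m; rewrite E -/(Ssum l (psi m)) => H.
change (g_sum l A C omega psi (psi m)) with (Ssum l (psi m)).
change (g_sum l A C omega psi m) with (Ssum l m) in E |- *.
rewrite mulmxBl mul1mx -scalemxAr.
by rewrite -addrA [X in _ = _ + X]addrC addrA -H addrK.
Qed.

Variable (l : nat).
Hypothesis Hunit : (1 - A ^+ l) \in unitmx.

Definition Fsol m := invmx (1 - A ^+ l) *m g_sum l A C omega psi m.

Lemma comm_invA : invmx (1 - A ^+ l) *m A = A *m invmx (1 - A ^+ l).
Proof.
have cT : (1 - A ^+ l) *m A = A *m (1 - A ^+ l).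
  rewrite mulmxBl mulmxBr mul1mx mulmx1 !mulmxE -exprS -exprSr //.
apply: (canRL (mulmxK Hunit)).
by rewrite -mulmxA -cT mulKmx.
Qed.

Lemma F_rec m : iter l psi m = m -> Fsol m = omega m *: C + A *m Fsol (psi m).
Proof.
move=> hm; rewrite /Fsol (g_rec l m hm) mulmxDr mulmxA mulVmx // mul1mx.
by rewrite mulmxA comm_invA -mulmxA.
Qed.

Lemma iter_psi_fix m : iter l psi m = m -> iter l psi (psi m) = psi m.
Proof. by rewrite -iterSr iterS => ->. Qed.

Lemma S_form k m : iter l psi m = m -> Ssum k m = Fsol m - A ^+ k *m Fsol (iter k psi m).
Proof.
elim: k m => [|k IH] m hm.
  by rewrite /Ssum big_ord0 expr0 mul1mx subrr.
rewrite sum_shift (IH _ (iter_psi_fix m hm)) (F_rec m hm) mulmxBr [A *m (A ^+ k *m _)]mulmxA.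
rewrite -[A *m A ^+ k]/(A * A ^+ k) -exprS -iterSr addrA.
by [].
Qed.

Lemma F_bound m : iter l psi m = m -> (0 < l)%N ->
  exists W, 0 <= W /\ forall k a b, `|Fsol (iter k psi m) a b| <= W.
Proof.
move=> hm l0.
pose G := fun t : 'I_l * ('I_n.+1 * 'I_1) => `|Fsol (iter t.1 psi m) t.2.1 t.2.2|.
exists (Num.max 0 (\big[Num.max/0]_t G t)); split; first by rewrite le_max lexx.
move=> k a b.
have -> : iter k psi m = iter (k %% l) psi m.
  by rewrite {1}(divn_eq k l) addnC iterD (@iter_mul _ psi m l (k %/ l) hm).
rewrite le_max; apply/orP; right.
exact: (le_bigmax _ G (Ordinal (ltn_pmod k l0), (a, b))).
Qed.

Lemma S_cvg (K r : R) m : 0 <= K -> 0 <= r -> r < 1 ->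
  (forall (k : nat) (a b : 'I_n.+1), `|(A ^+ k) a b| <= K * r ^+ k) ->
  iter l psi m = m -> (0 < l)%N ->
  (fun k => Ssum k m) @ \oo --> Fsol m.
Proof.
move=> K0 r0 r1 HK hm l0.
have [W [W0 HW]] := F_bound m hm l0.
rewrite (_ : (fun k => Ssum k m) = (fun k => Fsol m - A ^+ k *m Fsol (iter k psi m))); last first.
  by apply: funext => k; exact: S_form k m hm.
rewrite -[X in _ --> X]subr0.
apply: (@cvgB _ _ _ _ _ (fun=> Fsol m) (fun k => A ^+ k *m Fsol (iter k psi m))).
  exact: cvg_cst.
apply: (@mx_cvg0 R _ _ _ (n.+1%:R * (K * W)) r) => //.
  by rewrite mulr_ge0 // mulr_ge0.
move=> k a b.
apply: le_trans (@mulmx_bound R _ _ _ (A ^+ k) (Fsol (iter k psi m)) (K * r ^+ k) W (HK k) (HW k) a b) _.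
have -> : n.+1%:R * (K * W) * r ^+ k = n.+1%:R * (K * r ^+ k * W) by ring.
by [].
Qed.

Lemma f_eq (K r : R) m : 0 <= K -> 0 <= r -> r < 1 ->
  (forall (k : nat) (a b : 'I_n.+1), `|(A ^+ k) a b| <= K * r ^+ k) ->
  iter l psi m = m -> (0 < l)%N ->
  f_series A C omega psi m = Fsol m.
Proof.
move=> K0 r0 r1 HK hm l0.
apply: f_lim_aux.
exact: (S_cvg K r m K0 r0 r1 HK hm l0).
Qed.

End Core.

Theorem mainTheorem7 (R : realType) (M : topologicalType) (phi psi : M -> M)
  (N : nat) (A : 'M[R]_N) (C : 'cV[R]_N) (omega : M -> R) :
  hausdorff_space M -> compact [set: M] ->
  continuous phi -> continuous psi -> cancel phi psi -> cancel psi phi ->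
  continuous omega ->
  finite_set (periodic_points phi) ->
  spectral_radius A < 1 ->
  {in periodic_points phi &, injective (f_series A C omega psi)} <->
  {in periodic_points phi &, injective (g_sum (lcm_periods phi) A C omega psi)}.
Proof.
move=> _ _ _ _ can1 _ _ fin Hsr.
case: N A C Hsr => [|n] A C Hsr.
  split=> H x y hx hy _; apply: H => //; apply/matrixP => i j;
  by move: (ltn_ord i).
have [K [r [K0 [r0 [r1 HK]]]]] := @real_geo R n A Hsr.
have [l0 Hl] := @lcm_spec M phi fin.
set l := lcm_periods phi in l0 Hl *.
have Hu := @unit_IQ R n A l K r l0 K0 r0 r1 HK.
have Hpsi m : periodic_points phi m -> iter l psi m = m.
  by move=> hm; rewrite -{1}(Hl m hm) iter_can.
have Hf m : periodic_points phi m -> f_series A C omega psi m = @Fsol R M n A C omega psi l m.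
  move=> hm; have E := (@f_eq R M n A C omega psi l Hu K r m K0 r0 r1 HK (Hpsi m hm) l0).
  rewrite E; reflexivity.
split=> Hinj x y hx hy.
  have px : periodic_points phi x by move: hx; rewrite in_setE.
  have py : periodic_points phi y by move: hy; rewrite in_setE.
  move=> hg; apply: (Hinj x y hx hy).
  rewrite (Hf x px) (Hf y py) /Fsol hg; reflexivity.
have px : periodic_points phi x by move: hx; rewrite in_setE.
have py : periodic_points phi y by move: hy; rewrite in_setE.
move=> hf; apply: (Hinj x y hx hy).
move: hf; rewrite (Hf x px) (Hf y py) /Fsol => hf.
have := congr1 (mulmx (1 - A ^+ l)) hf.
rewrite !(mulKVmx Hu); exact.
Qed.
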